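(* Let $n\ge2$ and let $g:\mathcal{D}_n\to\mathbb{R}$ be jointly Lebesgue measurable. Consider the conditions: (D1) for every $\mathbf{R}\in[0,\infty)^n\setminus\{\mathbf{0}\}$, $\boldsymbol{\pi}\mapsto g(\boldsymbol{\pi},\mathbf{R})$ is concave on $\mathcal{D}_n(\cdot\mid\mathbf{R})$; (D2) $g(\boldsymbol{\pi},\mathbf{R})=0$ whenever $\mathbf{R}$ is constant on $\supp(\boldsymbol{\pi})$; (D3) $g(\boldsymbol{\pi},\alpha\mathbf{R})=g(\boldsymbol{\pi},\mathbf{R})$ for all $(\boldsymbol{\pi},\mathbf{R})\in\mathcal{D}_n$ and $\alpha>0$; (D4) there exist a Lebesgue measurable map $\mathbf{a}:[0,\infty)^n\setminus\{\mathbf{0}\}\to\mathbb{R}^n$ and a Lebesgue measurable $b:(0,\infty)\to\mathbb{R}$ such that for every $m\in(0,\infty)$ and $\mathbf{R}\in[0,\infty)^n\setminus\{\mathbf{0}\}$, $g(\boldsymbol{\pi},\mathbf{R})=\langle\mathbf{a}(\mathbf{R}),\boldsymbol{\pi}\rangle+b(m)$ for all $\boldsymbol{\pi}\in C_{m,\mathbf{R}}$, where $C_{m,\mathbf{R}}=\{\boldsymbol{\pi}\in\mathcal{D}_n(\cdot\mid\mathbf{R}):\langle\boldsymbol{\pi},\mathbf{R}\rangle=m\}$. Then: (i) $g$ is a gap function with a Lebesgue measurable generator if and only if $g$ satisfies (D2) and (D4); in that case, its generator is concave if and only if (D1) holds. (ii) $g$ satisfies (D2), (D3) and (D4) if and only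 if $g=c\,\Gamma$ for some $c\in\mathbb{R}$; in that case, $c\ge0$ if and only if (D1) holds.
   Context: $\Delta_n=\{\mathbf{x}\in[0,1]^n:\sum_ix_i=1\}$; $\supp(\mathbf{x})=\{i:x_i>0\}$; $\mathcal{D}_n=\{(\boldsymbol{\pi},\mathbf{R})\in\Delta_n\times[0,\infty)^n:\supp(\boldsymbol{\pi})\subseteq\supp(\mathbf{R})\}$; for $\mathbf{R}\in[0,\infty)^n\setminus\{\mathbf{0}\}$, $\mathcal{D}_n(\cdot\mid\mathbf{R})=\{\boldsymbol{\pi}\in\Delta_n:(\boldsymbol{\pi},\mathbf{R})\in\mathcal{D}_n\}$. A function $g:\mathcal{D}_n\to\mathbb{R}$ is a gap function with generator $\varphi:(0,\infty)\to\mathbb{R}$ if $g(\boldsymbol{\pi},\mathbf{R})=\varphi\big(\sum_{i\in\supp(\boldsymbol{\pi})}\pi_iR_i\big)-\sum_{i\in\supp(\boldsymbol{\pi})}\pi_i\varphi(R_i)$ for all $(\boldsymbol{\pi},\mathbf{R})\in\mathcal{D}_n$. The excess growth rate $\Gamma$ is the gap function with generator $\varphi=\log$. *)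

(* Defs.v *)
From HB Require Import structures.
From mathcomp Require Import all_boot all_order all_algebra.
From mathcomp Require Import all_classical all_reals all_analysis.
Set Implicit Arguments. Unset Strict Implicit. Unset Printing Implicit Defensive.
Import Order.TTheory GRing.Theory Num.Theory.
Local Open Scope classical_set_scope.
Local Open Scope ring_scope.

Section Defs.
Variable R : realType.

Definition box k (a b : 'I_k -> R) : set ('I_k -> R) :=
  [set x | forall i, a i <= x i <= b i].
Definition box_vol k (a b : 'I_k -> R) : R := \prod_(i < k) (b i - a i).

Definition leb_outer k (A : set ('I_k -> R)) : \bar R :=
  ereal_inf [set s : \bar R | exists a b : nat -> 'I_k -> R,
     [/\ (forall j i, a j i <= b j i),
         A `<=` \bigcup_j box (a j) (b j) &
         s = (\sum_(0 <= j <oo) (box_vol (a j) (b j))%:E)%E]].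

Definition leb_measurable k (E : set ('I_k -> R)) : Prop :=
  forall X : set ('I_k -> R),
    leb_outer X = (leb_outer (X `&` E) + leb_outer (X `&` ~` E))%E.

Definition leb_measurable_fun k (D : set ('I_k -> R)) (f : ('I_k -> R) -> R) : Prop :=
  leb_measurable D /\ forall t : R, leb_measurable (D `&` [set x | f x < t]).

Definition leb_measurable_fun1 (D : set R) (f : R -> R) : Prop :=
  leb_measurable_fun [set x : 'I_1 -> R | D (x ord0)] (fun x => f (x ord0)).

Definition leb_measurable_vfun k m (D : set ('I_k -> R))
    (f : ('I_k -> R) -> ('I_m -> R)) : Prop :=
  forall j : 'I_m, leb_measurable_fun D (fun x => f x j).

Definition supp n (x : 'I_n -> R) : pred 'I_n := fun i => 0 < x i.

Definition simplex n (x : 'I_n -> R) : Prop :=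
  (forall i, 0 <= x i <= 1) /\ \sum_(i < n) x i = 1.

Definition nonneg n (x : 'I_n -> R) : Prop := forall i, 0 <= x i.

Definition nonneg_nz n (x : 'I_n -> R) : Prop := nonneg x /\ x <> (fun _ => 0).

Definition inD n (p r : 'I_n -> R) : Prop :=
  simplex p /\ nonneg r /\ (forall i, 0 < p i -> 0 < r i).

(* D_n as a subset of R^(n+n) (first n coordinates pi, last n coordinates R) *)
Definition pi_part n (x : 'I_(n + n) -> R) : 'I_n -> R := fun i => x (lshift n i).
Definition R_part n (x : 'I_(n + n) -> R) : 'I_n -> R := fun i => x (rshift n i).
Definition Dset n : set ('I_(n + n) -> R) := [set x | inD (pi_part x) (R_part x)].

(* g : D_n -> R (only its values on D_n matter) is jointly Lebesgue measurable *)
Definition jointly_leb_measurable n (g : ('I_n -> R) -> ('I_n -> R) -> R) : Prop :=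
  leb_measurable_fun (@Dset n) (fun x => g (pi_part x) (R_part x)).

Definition wmean n (p r : 'I_n -> R) : R := \sum_(i < n | 0 < p i) p i * r i.

Definition dot n (x y : 'I_n -> R) : R := \sum_(i < n) x i * y i.

Definition is_gap_function n (g : ('I_n -> R) -> ('I_n -> R) -> R) (phi : R -> R) : Prop :=
  forall p r, inD p r ->
    g p r = phi (wmean p r) - \sum_(i < n | 0 < p i) p i * phi (r i).

Definition Gamma n (p r : 'I_n -> R) : R :=
  ln (wmean p r) - \sum_(i < n | 0 < p i) p i * ln (r i).

Definition pos_reals : set R := [set x | 0 < x].

Definition concave_on_pos (phi : R -> R) : Prop :=
  forall x y t : R, 0 < x -> 0 < y -> 0 <= t <= 1 ->
    t * phi x + (1 - t) * phi y <= phi (t * x + (1 - t) * y).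

Definition cond_D1 n (g : ('I_n -> R) -> ('I_n -> R) -> R) : Prop :=
  forall r, nonneg_nz r ->
  forall p1 p2 (t : R), inD p1 r -> inD p2 r -> 0 <= t <= 1 ->
    t * g p1 r + (1 - t) * g p2 r <= g (fun i => t * p1 i + (1 - t) * p2 i) r.

Definition cond_D2 n (g : ('I_n -> R) -> ('I_n -> R) -> R) : Prop :=
  forall p r, inD p r ->
    (forall i j, 0 < p i -> 0 < p j -> r i = r j) -> g p r = 0.

Definition cond_D3 n (g : ('I_n -> R) -> ('I_n -> R) -> R) : Prop :=
  forall p r (alpha : R), inD p r -> 0 < alpha ->
    g p (fun i => alpha * r i) = g p r.

Definition cond_D4 n (g : ('I_n -> R) -> ('I_n -> R) -> R) : Prop :=
  exists (a : ('I_n -> R) -> ('I_n -> R)) (b : R -> R),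
    [/\ leb_measurable_vfun (@nonneg_nz n) a,
        leb_measurable_fun1 pos_reals b &
        forall (m : R) r, 0 < m -> nonneg_nz r ->
        forall p, inD p r -> dot p r = m ->
          g p r = dot (a r) p + b m].

End Defs.

(* Main.v *)
Require Import Defs.
From HB Require Import structures.
From mathcomp Require Import all_boot all_order all_algebra.
From mathcomp Require Import all_classical all_reals all_analysis.
From mathcomp Require Import ring lra.
Import Order.TTheory GRing.Theory Num.Theory.
Set Implicit Arguments. Unset Strict Implicit. Unset Printing Implicit Defensive.
Local Open Scope classical_set_scope.
Local Open Scope ring_scope.

Section LO.
Variable R : realType.
Variable k : nat.
Local Notation T := ('I_k.+1 -> R).
Local Notation LO := (@leb_outer R k.+1).
Local Open Scope ereal_scope.

Lemma box_vol_ge0 (a b : T) : (forall i, a i <= b i)%R -> (0 <= box_vol a b)%R.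
Proof. by move=> h; apply: prodr_ge0 => i _; rewrite subr_ge0. Qed.

Lemma LO_ge0 A : 0 <= LO A.
Proof.
apply: le_ereal_inf_tmp => _ [a [b [hab _ ->]]].
by apply: nneseries_ge0 => j _; rewrite lee_fin box_vol_ge0.
Qed.

Lemma LO0 : LO set0 = 0.
Proof.
apply/eqP; rewrite eq_le LO_ge0 andbT.
apply: ereal_inf_lbound; exists (fun _ _ => 0%R), (fun _ _ => 0%R); split => //.
rewrite eseries0 // => j _ _.
by rewrite /box_vol big_ord_recl subrr mul0r.
Qed.

Lemma le_LO : {homo LO : A B / A `<=` B >-> A <= B}.
Proof.
move=> A B AB; apply: le_ereal_inf => _ [a [b [hab Bc ->]]].
by exists a, b; split => //; apply: subset_trans Bc.
Qed.

Lemma LO_sigma_subadditive : sigma_subadditive LO.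
Proof.
move=> A; have [[i ioo]|] := pselect (exists i, LO (A i) = +oo).
  rewrite (eseries_pinfty _ _ ioo) ?leey// => n _.
  by rewrite -ltNye (lt_le_trans _ (LO_ge0 _)).
rewrite -forallNE => Aoo.
suff add2e (e : {posnum R}) :
    LO (\bigcup_n A n) <= \sum_(i <oo) LO (A i) + e%:num%:E.
  by apply/lee_addgt0Pr => _/posnumP[].
rewrite (le_trans _ (epsilon_trick _ _ _))//; last first.
  by move=> n; exact: LO_ge0.
pose P n (ab : (nat -> T) * (nat -> T)) := [/\ (forall j i, ab.1 j i <= ab.2 j i)%R,
  A n `<=` \bigcup_j box (ab.1 j) (ab.2 j) &
  \sum_(j <oo) (box_vol (ab.1 j) (ab.2 j))%:E <= LO (A n) + (e%:num / (2 ^ n.+1)%:R)%:E].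
have [G PG] : {G : nat -> (nat -> T) * (nat -> T) & forall n, P n (G n)}.
  apply: (@choice _ _ P) => n; rewrite /P /leb_outer.
  set S := (X in ereal_inf X); move infS : (ereal_inf S) => iS.
  case: iS infS => [r Sr|Soo|Soo].
  - have en1 : (0 < e%:num / (2 ^ n.+1)%:R)%R by [].
    have /(lb_ereal_inf_adherent en1) : ereal_inf S \is a fin_num by rewrite Sr.
    move=> [x [a [b [hab AnB ->]]] xS].
    by exists (a, b); split => //; rewrite -Sr; exact/ltW.
  - by have := Aoo n; rewrite /leb_outer Soo.
  - suff : lbound S 0 by move/le_ereal_inf_tmp; rewrite Soo.
    move=> /= _ [a [b [hab _ ->]]].
    by apply: nneseries_ge0 => j _; rewrite lee_fin box_vol_ge0.
pose vol (p : nat * nat) := (box_vol ((G p.1).1 p.2) ((G p.1).2 p.2))%:E.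
have vol_ge0 x : 0 <= vol x by rewrite lee_fin box_vol_ge0 //; case: (PG x.1).
apply: (@le_trans _ _ (\esum_(i in setT) vol i)).
  rewrite /leb_outer; apply: ereal_inf_lbound => /=.
  have /card_esym/ppcard_eqP[f] := card_nat2.
  exists (fun j => (G (f j).1).1 (f j).2), (fun j => (G (f j).1).2 (f j).2).
  split.
  - by move=> j i; case: (PG (f j).1) => + _ _; apply.
  - move=> t [i _] Ait; have [_ cov _] := PG i; have [j _ Bijt] := cov _ Ait.
    exists (f^-1%FUN (i, j)) => //=.
    by rewrite invK ?inE.
  - rewrite -(esum_pred_image vol _ xpredT) ?[fun=> _]set_true//.
    congr esum; apply/seteqP; split=> x //= _.
    by exists (f^-1%FUN x) => //; rewrite invK ?inE.

rewrite (_ : esum _ _ = \sum_(i <oo) \sum_(j <oo ) vol (i, j)); last first.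
  pose J : nat -> set (nat * nat) := fun i => [set (i, j) | j in setT].
  rewrite (_ : setT = \bigcup_k J k); last first.
    by rewrite predeqE => -[a b]; split => // _; exists a => //; exists b.
  rewrite esum_bigcupT /=; last 2 first.
    - apply/trivIsetP => i j _ _ ij.
      rewrite predeqE => -[n m] /=; split => //= -[] [_] _ [<-{n} _].
      by move=> [m' _] [] /esym/eqP; rewrite (negbTE ij).
    - by move=> /= [n m].
  rewrite -(image_id [set: nat]) -fun_true esum_pred_image//; last first.
    by move=> n _; exact: esum_ge0.
  apply: eq_eseriesr => /= j _.
  rewrite -(esum_pred_image vol (pair j) predT)//=; last first.
    by move=> ? ? _ _; exact: (@can_inj _ _ _ snd).
  by congr esum; rewrite predeqE => -[a b]; split; move=> [i _ <-]; exists i.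
apply: lee_lim.
- apply: is_cvg_nneseries => n *.
  by apply: nneseries_ge0 => m *; exact: (vol_ge0 (n, m)).
- by apply: is_cvg_nneseries => n *; apply: adde_ge0 => //; exact: LO_ge0.
- by near=> n; apply: lee_sum => i _; case: (PG i).
Unshelve. all: by end_near. Qed.

HB.instance Definition _ := isOuterMeasure.Build R T LO LO0 LO_ge0 le_LO
  LO_sigma_subadditive.

End LO.

Section LM.
Variable R : realType.
Variable k : nat.
Local Notation T := ('I_k.+1 -> R).
Local Notation LO := (@leb_outer R k.+1).
Local Notation LM := (@leb_measurable R k.+1).

Lemma LM_setI A B : LM A -> LM B -> LM (A `&` B).
Proof. exact: (@caratheodory_measurable_setI R T LO). Qed.
Lemma LM_setU A B : LM A -> LM B -> LM (A `|` B).
Proof. exact: (@caratheodory_measurable_setU R T LO). Qed.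
Lemma LM_setC A : LM A -> LM (~` A).
Proof. exact: (@caratheodory_measurable_setC R T LO). Qed.
Lemma LM_setD A B : LM A -> LM B -> LM (A `\` B).
Proof. exact: (@caratheodory_measurable_setD R T LO). Qed.
Lemma LM_bigcup (A : nat -> set T) : (forall j, LM (A j)) -> LM (\bigcup_j A j).
Proof. exact: (@caratheodory_measurable_bigcup R T LO). Qed.
Lemma LM_setT : LM setT.
Proof. rewrite -setC0; apply: LM_setC; exact: (@caratheodory_measurable_set0 R T LO). Qed.
Lemma LM_le (A : set T) :
  (forall X, (LO (X `&` A) + LO (X `&` ~` A) <= LO X)%E) -> LM A.
Proof. exact: (@le_caratheodory_measurable R T LO). Qed.
Lemma LM_null (A : set T) : LO A = 0%E -> LM A.
Proof.
move=> A0; apply: LM_le => X.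
rewrite (_ : LO (X `&` A) = 0%E); last first.
  apply/eqP; rewrite eq_le LO_ge0 andbT -A0; apply: le_LO; exact: subIsetr.
by rewrite add0e; apply: le_LO; exact: subIsetl.
Qed.
Lemma LM_ext A B : A = B -> LM A -> LM B. Proof. by move=> ->. Qed.
End LM.

Definition upd (R : Type) k (f : 'I_k -> R) (i : 'I_k) (v : R) : 'I_k -> R :=
  fun j => if j == i then v else f j.
Arguments upd {R k}.

Section HS.
Variable R : realType.
Variable k : nat.
Local Notation T := ('I_k.+1 -> R).
Local Notation LO := (@leb_outer R k.+1).
Local Notation LM := (@leb_measurable R k.+1).

Definition rest (a b : T) i := \prod_(j < k.+1 | j != i) (b j - a j).

Lemma rest_ge0 (a b : T) i : (forall j, a j <= b j) -> 0 <= rest a b i.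
Proof. by move=> h; apply: prodr_ge0 => j _; rewrite subr_ge0. Qed.

Lemma vol_split (a b : T) i : box_vol a b = (b i - a i) * rest a b i.
Proof. by rewrite /box_vol (bigD1 i). Qed.

Lemma rest_upd_a (a b : T) i v : rest (upd a i v) b i = rest a b i.
Proof. by apply: eq_bigr => j ji; rewrite /upd (negbTE ji). Qed.
Lemma rest_upd_b (a b : T) i v : rest a (upd b i v) i = rest a b i.
Proof. by apply: eq_bigr => j ji; rewrite /upd (negbTE ji). Qed.

Lemma vol_upd (a b : T) i u v :
  box_vol (upd a i u) (upd b i v) = (v - u) * rest a b i.
Proof. by rewrite (vol_split _ _ i) rest_upd_a rest_upd_b /upd !eqxx. Qed.

Lemma LO_le_cover X (a b : nat -> T) : (forall j i, a j i <= b j i) ->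
  X `<=` \bigcup_j box (a j) (b j) ->
  (LO X <= \sum_(0 <= j <oo) (box_vol (a j) (b j))%:E)%E.
Proof. by move=> h1 h2; apply: ereal_inf_lbound; exists a, b. Qed.

Lemma LO_box (a b : T) : (forall i, a i <= b i) -> (LO (box a b) <= (box_vol a b)%:E)%E.
Proof.
move=> h.
pose A j := if j is 0%N then a else b; pose B j := if j is 0%N then b else b.
apply: (le_trans (@LO_le_cover _ A B _ _)).
- by case=> [|j] i //=.
- by move=> x bx; exists 0%N.
rewrite (nneseries_split _ 1); last first.
  by move=> j _; rewrite lee_fin box_vol_ge0 //; case: j => [|j] i /=.
rewrite big_nat1 /= eseries0 ?adde0 // => j hj _.
case: j hj => [|j] //= _.
by rewrite /box_vol (bigD1 ord0) //= subrr mul0r.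
Qed.

Lemma LM_half (H : set T) i c :
  (forall x, H x -> x i <= c) -> (forall x, ~ H x -> c <= x i) -> LM H.
Proof.
move=> hH hnH; apply: LM_le => X.
apply: le_ereal_inf_tmp => _ [a [b [hab Xc ->]]].
pose cl j := Num.max (a j i) (Num.min (b j i) c).
have cla j : a j i <= cl j by rewrite /cl le_max lexx.
have clb j : cl j <= b j i.
  by rewrite /cl ge_max hab /= ge_min lexx.
pose a1 j := a j; pose b1 j := upd (b j) i (cl j).
pose a2 j := upd (a j) i (cl j); pose b2 j := b j.
have h1 : forall j l, a1 j l <= b1 j l.
  by move=> j l; rewrite /a1 /b1 /upd; case: eqP => [->|]; [exact: cla|].
have h2 : forall j l, a2 j l <= b2 j l.
  by move=> j l; rewrite /a2 /b2 /upd; case: eqP => [->|]; [exact: clb|].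
apply: (@le_trans _ _ (\sum_(0 <= j <oo) (box_vol (a1 j) (b1 j))%:E +
                       \sum_(0 <= j <oo) (box_vol (a2 j) (b2 j))%:E)%E).
  apply: leeD; apply: LO_le_cover => //.
  - move=> x [Xx Hx]; have [j _ bx] := Xc x Xx; exists j => // l.
    rewrite /a1 /b1 /upd; case: eqP => [->|]; last by move=> _; apply: bx.
    rewrite (andP (bx i)).1 /cl /= le_max; apply/orP; right.
    rewrite le_min (andP (bx i)).2 /=; exact: hH.
  - move=> x [Xx Hx]; have [j _ bx] := Xc x Xx; exists j => // l.
    rewrite /a2 /b2 /upd; case: eqP => [->|]; last by move=> _; apply: bx.
    rewrite (andP (bx i)).2 andbT /cl /= ge_max (andP (bx i)).1 /=.
    by rewrite ge_min; apply/orP; right; exact: hnH.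
rewrite -nneseriesD; last 2 first.
- by move=> j _ _; rewrite lee_fin box_vol_ge0.
- by move=> j _ _; rewrite lee_fin box_vol_ge0.
apply: lee_nneseries.
  by move=> j _ _; rewrite adde_ge0 // lee_fin box_vol_ge0.
move=> j _; rewrite /a1 /b2 -[a j](_ : upd (a j) i (a j i) = a j); last first.
  by apply/funext => l; rewrite /upd; case: eqP => [->|].
rewrite -[b j](_ : upd (b j) i (b j i) = b j); last first.
  by apply/funext => l; rewrite /upd; case: eqP => [->|].
rewrite /b1 /a2.
rewrite !vol_upd -EFinD lee_fin -mulrDl.
by rewrite addrC addrA subrK.
Qed.

Lemma LM_lt i c : LM [set x : T | x i < c].
Proof.
apply: (@LM_half [set x : T | x i < c] i c) => x /=; first exact: ltW.
by move/negP; rewrite -leNgt.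
Qed.
Lemma LM_leq i c : LM [set x : T | x i <= c].
Proof.
by apply: (@LM_half [set x : T | x i <= c] i c) => x //= /negP; rewrite -ltNge => /ltW.
Qed.
Lemma LM_gt i c : LM [set x : T | c < x i].
Proof.
apply: (LM_ext _ (LM_setC (LM_leq i c))); apply/seteqP; split => x /=.
  by move/negP; rewrite -ltNge.
by move=> h; apply/negP; rewrite -ltNge.
Qed.
Lemma LM_ge i c : LM [set x : T | c <= x i].
Proof.
apply: (LM_ext _ (LM_setC (LM_lt i c))); apply/seteqP; split => x /=.
  by move/negP; rewrite -leNgt.
by move=> h; apply/negP; rewrite -leNgt.
Qed.

Lemma LO_point (x0 : T) : LO [set x0] = 0%E.
Proof.
Local Open Scope ereal_scope.
apply/eqP; rewrite eq_le LO_ge0 andbT.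
have hb : LO [set x0] <= LO (box x0 x0).
  by apply: le_LO => x -> i; rewrite lexx.
apply: (le_trans hb); apply: (le_trans (LO_box _)) => [i|]; first exact: lexx.
by rewrite /box_vol (bigD1 ord0) //= subrr mul0r.
Qed.

End HS.

Definition pt (R : Type) (r : R) : 'I_1 -> R := fun _ => r.

Section CYL.
Variable R : realType.
Variable k : nat.
Local Notation T := ('I_k.+1 -> R).
Local Notation LO := (@leb_outer R k.+1).
Local Notation LO1 := (@leb_outer R 1).
Local Notation LM := (@leb_measurable R k.+1).

Definition cyl i (E : set ('I_1 -> R)) : set T := [set x | E (pt (x i))].

Lemma vol1 (c d : 'I_1 -> R) : box_vol c d = d ord0 - c ord0.
Proof. by rewrite /box_vol big_ord1. Qed.

Lemma LO1_fin (u v : R) (F : set ('I_1 -> R)) : u <= v ->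
  exists l, LO1 (box (pt u) (pt v) `&` F) = l%:E /\ (0 <= l <= v - u).
Proof.
move=> uv.
have h1 : (LO1 (box (pt u) (pt v) `&` F) <= (v - u)%:E)%E.
  apply: (le_trans (@le_LO R 0 _ (box (pt u) (pt v)) _)); first exact: subIsetl.
  by apply: (le_trans (LO_box _)) => //; rewrite vol1.
have h0 := LO_ge0 (box (pt u) (pt v) `&` F).
exists (fine (LO1 (box (pt u) (pt v) `&` F))).
have hf : LO1 (box (pt u) (pt v) `&` F) \is a fin_num.
  by rewrite ge0_fin_numE // (le_lt_trans h1) // ltry.
split; first by rewrite fineK.
by apply/andP; split; rewrite -lee_fin fineK.
Qed.

Lemma LO_cyl_box (a b : T) i F : (forall j, a j <= b j) ->
  (LO (box a b `&` cyl i F) <=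
   LO1 (box (pt (a i)) (pt (b i)) `&` F) * (rest a b i)%:E)%E.
Proof.
move=> hab.
have [l [hl /andP[l0 _]]] := LO1_fin F (hab i).
rewrite hl.
have r0 := rest_ge0 i hab.
have H : forall e, 0 < e -> (LO (box a b `&` cyl i F) <= (l + e)%:E * (rest a b i)%:E)%E.
  move=> e e0.
  have /(lb_ereal_inf_adherent e0) : (LO1 (box (pt (a i)) (pt (b i)) `&` F)) \is a fin_num.
    by rewrite hl.
  move=> [_ [c [d [hcd cov ->]]]]; rewrite -/(leb_outer _) hl => slt.
  pose c' j := upd a i (c j ord0); pose d' j := upd b i (d j ord0).
  have h1 : forall j l, c' j l <= d' j l.
    by move=> j m; rewrite /c' /d' /upd; case: eqP => _ //; exact: hcd.
  apply: (le_trans (@LO_le_cover _ _ _ c' d' h1 _)).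
    move=> x [bx cx]; have [j _ bj] := cov (pt (x i)) (conj (fun _ => bx i) cx).
    exists j => // m; rewrite /c' /d' /upd; case: eqP => [->|_]; [exact: (bj ord0)|exact: bx].
  under eq_eseriesr do rewrite /c' /d' vol_upd -vol1 EFinM muleC.
  rewrite nneseriesZl; last by move=> j _; rewrite lee_fin; apply: box_vol_ge0 => m; exact: hcd.
  rewrite muleC; apply: lee_pmul => //.
    by apply: nneseries_ge0 => j _ _; rewrite lee_fin; apply: box_vol_ge0 => m; exact: hcd.
  exact: ltW.
have [rz|rp] := eqVneq (rest a b i) 0.
  have := H 1 ltr01; rewrite rz -!EFinM !mulr0 => h; exact: h.
have rpos : 0 < rest a b i by rewrite lt_def rp r0.
apply/lee_addgt0Pr => e e0.
apply: (le_trans (H (e / rest a b i) (divr_gt0 e0 rpos))).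
by rewrite -EFinM -EFinD lee_fin mulrDl divfK.
Qed.

Lemma LM_cyl i (E : set ('I_1 -> R)) : @leb_measurable R 1 E -> LM (cyl i E).
Proof.
move=> mE; apply: LM_le => X.
apply: le_ereal_inf_tmp => _ [a [b [hab Xc ->]]].
have s1 : forall F, (LO (X `&` F) <= \sum_(0 <= j <oo) LO (box (a j) (b j) `&` F))%E.
  move=> F; apply: (le_trans _ (outer_measure_sigma_subadditive LO _)).
  apply: le_LO => x [Xx Fx]; have [j _ bx] := Xc x Xx; by exists j.
apply: (le_trans (leeD (s1 _) (s1 _))).
rewrite -nneseriesD; last 2 first.
- by move=> j _ _; exact: LO_ge0.
- by move=> j _ _; exact: LO_ge0.
apply: lee_nneseries; first by move=> j _ _; rewrite adde_ge0 // LO_ge0.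
move=> j _.
apply: (le_trans (leeD (LO_cyl_box i E (hab j)) (LO_cyl_box i (~` E) (hab j)))).
rewrite -muleDl //; last by rewrite ge0_adde_def // inE LO_ge0.
rewrite -mE (vol_split _ _ i) EFinM; apply: lee_pmul => //.
- exact: LO_ge0.
- by rewrite lee_fin rest_ge0.
- by apply: (le_trans (LO_box _)) => [m|]; [exact: hab|rewrite vol1].
Qed.

End CYL.

Section OneD.
Variable R : realType.
Definition to1 (X : set R) : set ('I_1 -> R) := [set y | X (y ord0)].
Local Notation lam X := (@leb_outer R 1 (to1 X)).
Local Notation LMR X := (@leb_measurable R 1 (to1 X)).

Lemma lam_itv_ge (u v : R) : u <= v -> ((v - u)%:E <= lam [set x | (u <= x <= v)%R])%E.
Proof.
move=> uv; apply: le_ereal_inf_tmp => _ [c [d [hcd cov ->]]].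
have -> : (v - u)%:E = (@lebesgue_measure R) [set` `[u, v]].
  rewrite lebesgue_measure_itv /= lte_fin.
  by case: ltgtP uv => // -> _; rewrite subrr.
have -> : (\sum_(0 <= j <oo) (box_vol (c j) (d j))%:E =
          \sum_(0 <= j <oo) (@lebesgue_measure R) [set` `[c j ord0, d j ord0]])%E.
  apply: eq_eseriesr => j _; rewrite vol1 lebesgue_measure_itv /= lte_fin.
  by case: ltgtP (hcd j ord0) => // -> _; rewrite subrr.
apply: (@measure_sigma_subadditive _ _ _ lebesgue_measure [set` `[u,v]]
  (fun j => [set` `[c j ord0, d j ord0]])).
- by move=> j; exact: measurable_itv.
- exact: measurable_itv.
- move=> x /=; rewrite in_itv /= => hx.
  have [j _ bj] := cov (pt x) hx.
  by exists j => //=; rewrite in_itv /=; exact: (bj ord0).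
Qed.


Lemma lam_scale (s : R) (X : set R) : 0 < s ->
  (lam [set y | X (y / s)%R] <= s%:E * lam X)%E.
Proof.
move=> s0.
have key : ((s^-1)%:E * lam [set y | X (y / s)%R] <= lam X)%E.
  apply: le_ereal_inf_tmp => _ [c [d [hcd cov ->]]].
  pose c' j := fun i : 'I_1 => s * c j i; pose d' j := fun i : 'I_1 => s * d j i.
  have h1 : forall j i, c' j i <= d' j i.
    by move=> j i; rewrite /c' /d' ler_pM2l.
  have := @LO_le_cover R 0 (to1 [set y | X (y / s)%R]) c' d' h1.
  have cov' : to1 [set y | X (y / s)%R] `<=` \bigcup_j box (c' j) (d' j).
    move=> y /= Xy; have [j _ bj] := cov (pt (y ord0 / s)) Xy.
    exists j => // i; rewrite /c' /d'.
    have -> : i = ord0 by apply/val_inj; case: i => -[].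
    have /andP[h2 h3] := bj ord0; rewrite /pt in h2 h3.
    rewrite -[y ord0](divfK (lt0r_neq0 s0)) [_ * s]mulrC !ler_pM2l // h2 h3.
  move=> /(_ cov') hle.
  have eqs : (\sum_(0 <= j <oo) (box_vol (c' j) (d' j))%:E =
     s%:E * \sum_(0 <= j <oo) (box_vol (c j) (d j))%:E)%E.
    rewrite -nneseriesZl; last by move=> j _; rewrite lee_fin; apply: box_vol_ge0 => i; exact: hcd.
    by apply: eq_eseriesr => j _; rewrite !vol1 /c' /d' -EFinM mulrBr.
  rewrite eqs in hle.
  apply: (@le_trans _ _ ((s^-1)%:E * (s%:E * \sum_(0 <= j <oo) (box_vol (c j) (d j))%:E))%E).
    apply: lee_pmul => //; first by rewrite lee_fin invr_ge0 ltW.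
    exact: LO_ge0.
  by rewrite muleA -EFinM mulVf ?gt_eqF // mul1e.
rewrite -[X in (X <= _)%E]mul1e -(divff (lt0r_neq0 s0)) EFinM -muleA.
apply: lee_pmul => //; first by rewrite lee_fin ltW.
by rewrite mule_ge0 // ?LO_ge0 // lee_fin invr_ge0 ltW.
Qed.

End OneD.

Section St.
Variable R : realType.
Local Notation lam X := (@leb_outer R 1 (to1 X)).
Local Notation LMR X := (@leb_measurable R 1 (to1 X)).

Lemma I1_ord0 (i : 'I_1) : i = ord0.
Proof. by apply/val_inj; case: i => -[]. Qed.

Lemma lam_mono (X Y : set R) : X `<=` Y -> (lam X <= lam Y)%E.
Proof. by move=> XY; apply: le_LO => y /=; exact: XY. Qed.

Lemma lam_ge0 (X : set R) : (0 <= lam X)%E.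
Proof. exact: LO_ge0. Qed.

Lemma lam_itv_le (u v : R) : u <= v -> (lam [set x | (u <= x <= v)%R] <= (v - u)%:E)%E.
Proof.
move=> uv; apply: (@le_trans _ _ (@leb_outer R 1 (box (pt u) (pt v)))).
  by apply: le_LO => y /= h i; rewrite (I1_ord0 i).
by apply: (le_trans (LO_box _)) => //; rewrite vol1.
Qed.

Lemma LMR_itv (u v : R) : LMR [set x | (u <= x <= v)%R].
Proof.
have h := LM_setI (LM_ge (k:=0) ord0 u) (LM_leq (k:=0) ord0 v).
apply: (LM_ext _ h); apply/seteqP; split => y; rewrite /to1 /=.
  by move=> [h1 h2]; rewrite h1 h2.
by move=> /andP[h1 h2].
Qed.

Lemma LMR_I (X Y : set R) : LMR X -> LMR Y -> LMR (X `&` Y).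
Proof. exact: LM_setI. Qed.

Lemma lam0 : lam set0 = 0%E.
Proof. by rewrite (_ : to1 set0 = set0) ?LO0 //; apply/seteqP; split. Qed.

Lemma steinhaus (E : set R) : LMR E -> E `<=` [set x | (1 <= x <= 2)%R] ->
  (0 < lam E)%E ->
  exists2 dl, 0 < dl & forall s, 1 <= s <= 1 + dl ->
     exists x y, [/\ E x, E y & x = s * y].
Proof.
move=> mE E12 Epos.
have Ele : (lam E <= 1%:E)%E.
  apply: (le_trans (lam_mono E12)); apply: (le_trans (lam_itv_le _)).
    by rewrite ler1n.
  by rewrite lee_fin; lra.
have Efin : lam E \is a fin_num by rewrite ge0_fin_numE ?lam_ge0 // (le_lt_trans Ele) ?ltry.
set l := fine (lam E).
have El : lam E = l%:E by rewrite fineK.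
have l0 : 0 < l by rewrite -lte_fin -El.
have /(lb_ereal_inf_adherent (divr_gt0 l0 (ltr0n _ 3))) : @leb_outer R 1 (to1 E) \is a fin_num by [].
move=> [_ [c [d [hcd cov ->]]]]; rewrite -/(leb_outer _) El => slt.
pose I j := [set x : R | (c j ord0 <= x <= d j ord0)%R].
have [j hj] : exists j, ((3/4 * (d j ord0 - c j ord0))%:E < lam (E `&` I j))%E.
  apply: contrapT => nj.
  have nj' : forall j, (lam (E `&` I j) <= (3/4 * (d j ord0 - c j ord0))%:E)%E.
    by move=> j; rewrite leNgt; apply/negP => h; apply: nj; exists j.
  have : (lam E <= \sum_(0 <= j <oo) lam (E `&` I j))%E.
    apply: (le_trans _ (outer_measure_sigma_subadditive (@leb_outer R 1) _)).
    apply: le_LO => y Ey; have [j _ bj] := cov y Ey; exists j => //.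
    by split => //; exact: (bj ord0).
  move/le_trans => /(_ _ (lee_nneseries (fun i _ _ => lam_ge0 _) (fun j _ => nj' j))).
  under eq_eseriesr do rewrite EFinM -vol1.
  rewrite nneseriesZl; last by move=> i _; rewrite lee_fin; apply: box_vol_ge0 => m; exact: hcd.
  set S := (\sum_(0 <= j <oo) _)%E in slt *.
  have S0 : (0 <= S)%E by apply: nneseries_ge0 => i _ _; rewrite lee_fin; apply: box_vol_ge0 => m; exact: hcd.
  have Sfin : S \is a fin_num by rewrite ge0_fin_numE // (lt_trans slt) ?ltry.
  rewrite -(fineK Sfin) in slt S0 *; rewrite El -EFinM !lee_fin -EFinD lte_fin in slt S0 *.
  lra.
set c0 := c j ord0 in hj; set d0 := d j ord0 in hj.
have cd0 : c0 <= d0 by exact: hcd.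
set A := E `&` I j.
have mA : LMR A by apply: LMR_I => //; exact: LMR_itv.
set c' := Order.max c0 1; set d' := Order.min d0 2.
have Asub : A `<=` [set x | (c' <= x <= d')%R].
  move=> x [/E12 /andP[x1 x2] /andP[x3 x4]].
  by rewrite /= /c' /d' ge_max le_min x1 x2 x3 x4.
have cd' : c' <= d'.
  rewrite leNgt; apply/negP => dc.
  have : (lam A <= 0)%E.
    rewrite -lam0; apply: lam_mono => x /Asub /andP[h1 h2].
    have := le_trans h1 h2; by rewrite leNgt dc.
  move/(lt_le_trans hj); rewrite lte_fin; lra.
have Ale : (lam A <= (d' - c')%:E)%E := le_trans (lam_mono Asub) (lam_itv_le cd').
have Afin : lam A \is a fin_num by rewrite ge0_fin_numE ?lam_ge0 // (le_lt_trans Ale) ?ltry.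
set a := fine (lam A).
have Aa : lam A = a%:E by rewrite fineK.
rewrite Aa lte_fin in hj; rewrite Aa lee_fin in Ale.
have d'c' : d' - c' <= d0 - c0.
  have h1 : c0 <= c' by rewrite /c' le_max lexx.
  have h2 : d' <= d0 by rewrite /d' ge_min lexx.
  lra.
have c'1 : 1 <= c' by rewrite /c' le_max lexx orbT.
have dcpos : 0 < d' - c' by lra.
have d'pos : 0 < d' by lra.
exists ((d' - c') / (2 * d')); first by apply: divr_gt0 => //; lra.
move=> s /andP[s1 s2]; apply: contrapT => nxy.
have s0 : 0 < s by lra.
have sd : s * d' <= d' + (d' - c') / 2.
  have := ler_wpM2r (ltW d'pos) s2.
  have -> : (1 + (d' - c') / (2 * d')) * d' = d' + (d' - c') / 2.
    by field; rewrite gt_eqF.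
  done.
set sA := [set z | A (z / s)].
have disj : forall z, A z -> sA z -> False.
  move=> z [Ez _] [Ezs _]; apply: nxy; exists z, (z / s); split => //.
  by rewrite mulrC divfK ?gt_eqF.
have eqU : lam (A `|` sA) = (lam A + lam sA)%E.
  have e1 : to1 (A `|` sA) `&` to1 A = to1 A.
    by apply/seteqP; split => y /=; [move=> [] | move=> h; split => //; left].
  have e2 : to1 (A `|` sA) `&` ~` to1 A = to1 sA.
    apply/seteqP; split => y /=; first by move=> [[h|h] nh].
    by move=> h; split; [right|move/disj; apply].
  by rewrite (mA (to1 (A `|` sA))) e1 e2.
have sAge : (lam A <= lam sA)%E.
  have := @lam_scale R s^-1 sA; rewrite invr_gt0 => /(_ s0).
  rewrite (_ : to1 [set y | sA (y / s^-1)] = to1 A); last first.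
    by apply/seteqP; split => y; rewrite /to1 /sA /= invrK mulfK ?gt_eqF.
  move/le_trans; apply; apply: gee_pMl => //; first exact: lam_ge0.
  by rewrite lee_fin invf_le1 //.
have Ule : (lam (A `|` sA) <= (s * d' - c')%:E)%E.
  apply: (le_trans (lam_mono (Y:=[set x | (c' <= x <= s * d')%R]) _)).
    move=> z [/Asub /andP[h1 h2]|/Asub /andP[h1 h2]] /=.
      by rewrite h1 /=; nra.
    have -> : z = s * (z / s) by rewrite mulrC divfK ?gt_eqF.
    apply/andP; split; nra.
  by apply: lam_itv_le; nra.
have sAfin : lam sA \is a fin_num.
  rewrite ge0_fin_numE ?lam_ge0 //.
  apply: (le_lt_trans (@lam_mono sA (A `|` sA) _)); first by move=> z h; right.
  exact: (le_lt_trans Ule (ltry _)).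
rewrite eqU -(fineK sAfin) Aa -EFinD lee_fin in Ule.
rewrite -(fineK sAfin) Aa lee_fin in sAge.
clear Epos Ele Efin El slt Afin Aa eqU sAfin.
lra.
Qed.
End St.

Section Cauchy.
Variable R : realType.

Lemma additive_bounded (h : R -> R) (eta M : R) :
  (forall u v, h (u + v) = h u + h v) -> 0 < eta -> h eta = 0 ->
  (forall u, 0 <= u <= eta -> `|h u| <= M) -> forall u, h u = 0.
Proof.
move=> hadd eta0 heta hb.
have h0 : h 0 = 0 by have := hadd 0 0; rewrite addr0 => /eqP; rewrite -subr_eq subrr eq_sym => /eqP.
have hN u : h (- u) = - h u by apply/eqP; rewrite -addr_eq0 -hadd addNr h0.
have hn : forall n : nat, forall u, 0 <= u <= n%:R * eta -> `|h u| <= M.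
  elim=> [|n IH] u /andP[u0 u1].
    by apply: hb; rewrite u0 /=; move: u1; rewrite mul0r => /le_trans; apply; exact: ltW.
  have [ue|ue] := leP u eta; first by apply: hb; rewrite u0.
  have -> : h u = h (u - eta) by rewrite hadd hN heta oppr0 addr0.
  apply: IH; apply/andP; split; first lra.
  by move: u1; rewrite -natr1 mulrDl mul1r; lra.
have hall u : `|h u| <= M.
  wlog u0 : u / 0 <= u.
    move=> W; have [/W //|u0] := leP 0 u.
    by rewrite -normrN -hN; apply: W; lra.
  apply: (hn (Num.Def.archi_bound (u / eta))); rewrite u0 /=.
  have := archi_boundP (divr_ge0 u0 (ltW eta0)).
  by rewrite ltr_pdivrMr // => /ltW.
have hmul : forall n : nat, forall u, h (n%:R * u) = n%:R * h u.
  by elim=> [|n IH] u; rewrite ?mul0r ?h0 // -natr1 !mulrDl !mul1r hadd IH.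
move=> u; apply/eqP; apply: contraT => hu.
have hup : 0 < `|h u| by rewrite normr_gt0.
have M0 : 0 <= M by apply: le_trans (hall u).
set n := Num.Def.archi_bound (M / `|h u|).
have := archi_boundP (divr_ge0 M0 (ltW hup)).
rewrite ltr_pdivrMr // -/n => hlt.
have := hall (n%:R * u); rewrite hmul normrM ger0_norm ?ler0n //.
by rewrite leNgt hlt.
Qed.

Lemma log_cauchy (B : R -> R) (dl M : R) :
  (forall x y, 0 < x -> 0 < y -> B (x * y) = B x + B y) -> 0 < dl ->
  (forall s, 1 <= s <= 1 + dl -> `|B s| <= M) ->
  exists c, forall x, 0 < x -> B x = c * ln x.
Proof.
move=> hB dl0 hb.
set eta := ln (1 + dl).
have eta0 : 0 < eta by apply: ln_gt0; lra.
have eeta : expR eta = 1 + dl by rewrite /eta lnK // posrE; lra.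
set f := fun u => B (expR u).
have fadd u v : f (u + v) = f u + f v by rewrite /f expRD hB ?expR_gt0.
set c := f eta / eta.
pose h u := f u - c * u.
have hadd u v : h (u + v) = h u + h v by rewrite /h fadd mulrDr; ring.
have heta : h eta = 0 by rewrite /h /c divfK ?gt_eqF // subrr.
have hb' : forall u, 0 <= u <= eta -> `|h u| <= M + `|c| * eta.
  move=> u /andP[u0 u1].
  apply: (le_trans (ler_normB _ _)); apply: lerD.
    by apply: hb; apply/andP; split; [rewrite -expR0 ler_expR | rewrite -eeta ler_expR].
  by rewrite normrM (ger0_norm u0) ler_wpM2l.
have h0 := additive_bounded hadd eta0 heta hb'.
exists c => x x0.
have := h0 (ln x); rewrite /h /f lnK ?posrE //.
by move/eqP; rewrite subr_eq0 => /eqP.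
Qed.

End Cauchy.

Section Alg.
Variable R : realType.
Variable n : nat.
Local Notation V := ('I_n -> R).

Lemma supp_sum (p : V) (F : 'I_n -> R) : (forall i, 0 <= p i) ->
  \sum_(i < n | 0 < p i) p i * F i = \sum_(i < n) p i * F i.
Proof.
move=> p0; rewrite big_mkcond; apply: eq_bigr => i _.
have [//|h] := ltP 0 (p i).
have -> : p i = 0 by apply/eqP; rewrite eq_le h p0.
by rewrite mul0r.
Qed.

Lemma inD_ge0 (p r : V) : inD p r -> forall i, 0 <= p i.
Proof. by move=> [[h _] _] i; case/andP: (h i). Qed.

Lemma inD_sum1 (p r : V) : inD p r -> \sum_(i < n) p i = 1.
Proof. by move=> [[_ h] _]. Qed.

Lemma wmean_dot (p r : V) : inD p r -> wmean p r = dot p r.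
Proof. by move=> h; rewrite /wmean supp_sum //; exact: inD_ge0 h. Qed.

Lemma gap_form g phi (p r : V) : is_gap_function g phi -> inD p r ->
  g p r = phi (dot p r) - dot p (fun i => phi (r i)).
Proof.
move=> hg h; rewrite hg // wmean_dot // supp_sum //; exact: inD_ge0 h.
Qed.

Lemma dot_comb (p1 p2 v : V) (t : R) :
  dot (fun i => t * p1 i + (1 - t) * p2 i) v = t * dot p1 v + (1 - t) * dot p2 v.
Proof.
rewrite /dot !mulr_sumr -big_split /=; apply: eq_bigr => i _; ring.
Qed.

Definition ev (i : 'I_n) : V := fun j => if j == i then 1 else 0.


Lemma dot_ev i (v : V) : dot (ev i) v = v i.
Proof.
rewrite /dot (bigD1 i) //= /ev eqxx mul1r big1 ?addr0 // => j /negbTE ->.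
by rewrite mul0r.
Qed.

Lemma dotC (u v : V) : dot u v = dot v u.
Proof. by apply: eq_bigr => i _; rewrite mulrC. Qed.

Lemma inD_ev i (r : V) : nonneg r -> 0 < r i -> inD (ev i) r.
Proof.
move=> r0 ri; split; [split|split=> //].
- by move=> j; rewrite /ev; case: ifP => _; rewrite ?lexx ?ler01.
- by have := dot_ev i (fun _ => 1); rewrite /dot => h; rewrite -[RHS]h; apply: eq_bigr => j _; rewrite mulr1.
- by move=> j; rewrite /ev; case: eqP => [->|] //; rewrite ltxx.
Qed.

Lemma inD_pos_dot (p r : V) : inD p r -> 0 < dot p r.
Proof.
move=> h; have p0 := inD_ge0 h.
have [i pi] : exists i, 0 < p i.
  apply: contrapT => ne.
  have : \sum_(i < n) p i = 0.
    apply: big1 => i _; apply/eqP; rewrite eq_le p0 andbT leNgt.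
    by apply/negP => pi; apply: ne; exists i.
  by rewrite (inD_sum1 h) => /eqP; rewrite oner_eq0.
have r0 : forall j, 0 <= r j by case: h => _ [].
have ri : 0 < r i by case: h => _ [_]; apply.
rewrite /dot (bigD1 i) //=; apply: ltr_pwDl; first exact: mulr_gt0.
by apply: sumr_ge0 => j _; apply: mulr_ge0.
Qed.

Lemma inD_nnz (p r : V) : inD p r -> nonneg_nz r.
Proof.
move=> h; split; first by case: h => _ [].
move=> r0; have := inD_pos_dot h; rewrite /dot r0.
by rewrite big1 ?ltxx // => i _; rewrite mulr0.
Qed.

Lemma inD_comb (p1 p2 r : V) (t : R) : inD p1 r -> inD p2 r -> 0 <= t <= 1 ->
  inD (fun i => t * p1 i + (1 - t) * p2 i) r.
Proof.
move=> h1 h2 /andP[t0 t1].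
have a1 := inD_ge0 h1; have a2 := inD_ge0 h2.
have b1 : forall i, p1 i <= 1 by move=> i; case: h1 => -[h _] _; case/andP: (h i).
have b2 : forall i, p2 i <= 1 by move=> i; case: h2 => -[h _] _; case/andP: (h i).
split; [split|split].
- move=> i; have := a1 i; have := a2 i; have := b1 i; have := b2 i.
  move=> *; apply/andP; split; nra.
- rewrite big_split /= -!mulr_sumr (inD_sum1 h1) (inD_sum1 h2); ring.
- by case: h1 => _ [].
- move=> i hi; have := a1 i; have := a2 i => q2 q1.
  case: h1 => _ [_ s1]; case: h2 => _ [_ s2].
  have [pos1|] := ltP 0 (p1 i); first exact: (s1 i pos1).
  have [pos2|] := ltP 0 (p2 i); first by move=> _; exact: (s2 i pos2).
  move=> z2 z1; have e1 : p1 i = 0 by lra.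
  have e2 : p2 i = 0 by lra.
  by move: hi; rewrite e1 e2 !mulr0 addr0 ltxx.
Qed.

End Alg.
Arguments ev {R n}.

Section Gap.
Variable R : realType.
Variable n : nat.
Local Notation V := ('I_n -> R).
Implicit Types (g : V -> V -> R) (phi : R -> R).

Lemma inD_exists (p r : V) : inD p r -> exists i, 0 < p i.
Proof.
move=> h; have p0 := inD_ge0 h.
apply: contrapT => ne.
have : \sum_(i < n) p i = 0.
  apply: big1 => i _; apply/eqP; rewrite eq_le p0 andbT leNgt.
  by apply/negP => pi; apply: ne; exists i.
by rewrite (inD_sum1 h) => /eqP; rewrite oner_eq0.
Qed.

Lemma inD_supp (p r : V) i : inD p r -> 0 < p i -> 0 < r i.
Proof. by case=> _ [_]; apply. Qed.

Lemma supp_sum1 (p r : V) : inD p r -> \sum_(i < n | 0 < p i) p i = 1.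
Proof.
move=> h; rewrite -(inD_sum1 h).
have := supp_sum (fun _ => 1) (inD_ge0 h).
by under eq_bigr do rewrite mulr1; under [X in _ = X -> _]eq_bigr do rewrite mulr1.
Qed.

Lemma gap_D2 g phi : is_gap_function g phi -> cond_D2 g.
Proof.
move=> hg p r hpr hc.
have [i0 pi0] := inD_exists hpr.
have p0 := inD_ge0 hpr.
have E (F : R -> R) : dot p (fun i => F (r i)) = F (r i0).
  rewrite /dot -supp_sum //.
  rewrite (eq_bigr (fun i => p i * F (r i0))); last first.
    by move=> i pi; rewrite (hc i i0).
  by rewrite -mulr_suml (supp_sum1 hpr) mul1r.
rewrite (gap_form hg hpr) (E id) (E phi); exact: subrr.
Qed.

Lemma gap_concave g phi (i0 i1 : 'I_n) : i0 != i1 -> is_gap_function g phi ->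
  (concave_on_pos phi <-> cond_D1 g).
Proof.
move=> i01 hg; split.
- move=> hc r rnz p1 p2 t h1 h2 ht.
  have h := inD_comb h1 h2 ht.
  rewrite !(gap_form hg) // !dot_comb.
  have m1 := inD_pos_dot h1; have m2 := inD_pos_dot h2.
  have := hc _ _ t m1 m2 ht; lra.
- move=> hD x y t x0 y0 ht.
  pose r := fun i : 'I_n => if i == i0 then x else y.
  have r0 : nonneg r by move=> i; rewrite /r; case: ifP => _; lra.
  have rnz : nonneg_nz r.
    split => // /(congr1 (fun f => f i0)); rewrite /r eqxx => x0'; lra.
  have ri0 : r i0 = x by rewrite /r eqxx.
  have ri1 : r i1 = y by rewrite /r eq_sym (negbTE i01).
  have e0 : inD (ev i0) r by apply: inD_ev; rewrite // ri0.
  have e1 : inD (ev i1) r by apply: inD_ev; rewrite // ri1.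
  have := hD r rnz _ _ t e0 e1 ht.
  have h := inD_comb e0 e1 ht.
  rewrite !(gap_form hg) // !dot_comb !dot_ev ri0 ri1 !subrr; lra.
Qed.

Lemma D2D4_gap g : cond_D2 g -> cond_D4 g ->
  exists phi, leb_measurable_fun1 (@pos_reals R) phi /\ is_gap_function g phi.
Proof.
move=> hD2 [a [b [_ mb hD4]]]; exists b; split => // p r hpr.
have rnz := inD_nnz hpr.
have m0 := inD_pos_dot hpr.
rewrite (hD4 _ r m0 rnz p hpr erefl) wmean_dot //.
have ar : forall i, 0 < r i -> a r i = - b (r i).
  move=> i ri; have ei := inD_ev rnz.1 ri.
  have := hD4 (r i) r ri rnz (ev i) ei (dot_ev i r).
  rewrite hD2 //; last first.
    by move=> j j' ; rewrite /ev; case: eqP => [->|]; case: eqP => [->|] //; rewrite ltxx.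
  rewrite dotC dot_ev => /eqP; rewrite eq_sym addr_eq0 => /eqP //.
rewrite addrC; congr (_ + _).
rewrite dotC /dot -!(supp_sum _ (inD_ge0 hpr)) -sumrN; apply: eq_bigr => i pi.
by rewrite ar ?(inD_supp hpr pi) // mulrN.
Qed.

End Gap.

Section Gam.
Variable R : realType.
Variable n : nat.
Local Notation V := ('I_n -> R).
Implicit Types (g : V -> V -> R) (phi : R -> R).

Lemma gamma_gap g (c : R) : (forall p r, inD p r -> g p r = c * Gamma p r) ->
  is_gap_function g (fun x => c * ln x).
Proof.
move=> hg p r h; rewrite hg // /Gamma mulrBr mulr_sumr; congr (_ - _).
by apply: eq_bigr => i _; rewrite mulrCA.
Qed.

Lemma inD_scale (p r : V) (al : R) : inD p r -> 0 < al -> inD p (fun i => al * r i).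
Proof.
move=> [hp [hr hs]] a0; split => //; split.
  by move=> i; apply: mulr_ge0; [exact: ltW|exact: hr].
by move=> i pi; apply: mulr_gt0 => //; exact: hs.
Qed.

Lemma Gamma_scale (p r : V) (al : R) : inD p r -> 0 < al ->
  Gamma p (fun i => al * r i) = Gamma p r.
Proof.
move=> h a0; have h' := inD_scale h a0.
have ds : dot p (fun i => al * r i) = al * dot p r.
  by rewrite /dot mulr_sumr; apply: eq_bigr => i _; rewrite mulrCA.
rewrite /Gamma !wmean_dot // ds.
have w0 := inD_pos_dot h.
rewrite lnM ?posrE //.
rewrite (eq_bigr (fun i => p i * ln al + p i * ln (r i))); last first.
  by move=> i pi; rewrite lnM ?posrE // ?mulrDr //; exact: (inD_supp h pi).
by rewrite big_split /= -mulr_suml (supp_sum1 h) mul1r; ring.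
Qed.

Lemma gamma_D3 g (c : R) : (forall p r, inD p r -> g p r = c * Gamma p r) ->
  cond_D3 g.
Proof.
move=> hg p r al h a0; rewrite !hg ?Gamma_scale //; exact: inD_scale.
Qed.

Lemma ln_concave (x y t : R) : 0 < x -> 0 < y -> 0 <= t <= 1 ->
  t * ln x + (1 - t) * ln y <= ln (t * x + (1 - t) * y).
Proof.
move=> x0 y0 /andP[t0 t1].
set w := t * x + (1 - t) * y.
have w0 : 0 < w.
  rewrite /w; have [->|tp] := eqVneq t 0; first by rewrite mul0r add0r subr0 mul1r.
  have : 0 < t by rewrite lt_def tp t0.
  move=> tq; have h1 : 0 < t * x by exact: mulr_gt0.
  have h2 : 0 <= (1 - t) * y by apply: mulr_ge0; lra.
  lra.
have key z : 0 < z -> ln z - ln w <= z / w - 1.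
  move=> z0; rewrite -ln_div ?posrE //.
  have := @le_ln1Dx R (z / w - 1); rewrite addrCA subrr addr0; apply.
  by rewrite ltrBrDl subrr divr_gt0.
have k1 := key x x0; have k2 := key y y0.
have : t * (ln x - ln w) + (1 - t) * (ln y - ln w) <= t * (x / w - 1) + (1 - t) * (y / w - 1).
  by apply: lerD; apply: ler_wpM2l => //; lra.
have -> : t * (x / w - 1) + (1 - t) * (y / w - 1) = 0.
  rewrite /w; field; rewrite -/w gt_eqF //.
lra.
Qed.

Lemma cln_concave (c : R) : concave_on_pos (fun x => c * ln x) <-> 0 <= c.
Proof.
split.
- move=> h.
  have h4 : (0 : R) < 4 by rewrite ltr0n.
  have ht : 0 <= (1 / 2 : R) <= 1 by apply/andP; split; lra.
  have := h 1 4 (1/2) ltr01 h4 ht; rewrite ln1 mulr0 mulr0 add0r.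
  have ->: (1 / 2 * 1 + (1 - 1 / 2) * 4 : R) = 5 / 2 by field.
  have -> : (4 : R) = 2 * 2 by rewrite -natrM.
  rewrite lnM ?posrE ?ltr0n //.
  have l2 : ln (2 : R) < ln (5 / 2) by rewrite ltr_ln ?posrE //; lra.
  move=> hh; rewrite leNgt; apply/negP => c0.
  have : c * (ln (5 / 2) - ln 2) < 0 by rewrite nmulr_rlt0 // subr_gt0.
  move: hh; clear h; rewrite mulrBr; lra.
- move=> c0 x y t x0 y0 ht.
  have := ler_wpM2l c0 (ln_concave x0 y0 ht).
  by apply: le_trans; rewrite le_eqVlt; apply/orP; left; apply/eqP; ring.
Qed.

Lemma gamma_D1 g (c : R) (i0 i1 : 'I_n) : i0 != i1 ->
  (forall p r, inD p r -> g p r = c * Gamma p r) -> (0 <= c <-> cond_D1 g).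
Proof.
move=> i01 hg; rewrite -cln_concave; exact: (gap_concave i01 (gamma_gap hg)).
Qed.
End Gam.

Section GD4.
Variable R : realType.
Local Notation LMR X := (@leb_measurable R 1 (to1 X)).

Lemma mfun1_pos (phi : R -> R) : leb_measurable_fun1 (@pos_reals R) phi ->
  LMR [set y | 0 < y].
Proof. by case. Qed.

Lemma mfun1_lt (phi : R -> R) : leb_measurable_fun1 (@pos_reals R) phi ->
  forall t, LMR [set y | 0 < y /\ phi y < t].
Proof. by case=> _ h t; exact: h. Qed.

Lemma mfun1_gt (phi : R -> R) : leb_measurable_fun1 (@pos_reals R) phi ->
  forall s, LMR [set y | 0 < y /\ s < phi y].
Proof.
move=> mphi s.
have h : forall m : nat, LMR ([set y | 0 < y] `\` [set y | 0 < y /\ phi y < s + (m.+1%:R)^-1]).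
  move=> m; apply: LM_setD; [exact: (mfun1_pos mphi)|exact: (mfun1_lt mphi)].
apply: (LM_ext _ (LM_bigcup h)); apply/seteqP; split => y /=.
  move=> [m _ [y0 /not_andP [//|/negP]]]; rewrite -leNgt => hle; split => //.
  by apply: lt_le_trans hle; rewrite ltrDl invr_gt0 ltr0n.
move=> [y0 hs].
have d0 : 0 < phi (y ord0) - s by rewrite subr_gt0.
have hd : 0 <= (phi (y ord0) - s)^-1 by rewrite invr_ge0 ltW.
have := archi_boundP hd; set m := Num.Def.archi_bound _ => hm.
exists m => //; split => //; move=> [_]; apply/negP; rewrite -leNgt.
rewrite -lerBrDl; apply: le_trans (ltW _) (lexx _).
rewrite -[X in _ < X]invrK ltf_pV2 ?posrE ?invr_gt0 ?ltr0n //.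
by apply: (lt_le_trans hm); rewrite ler_nat.
Qed.

End GD4.

Section GD4n.
Variable R : realType.
Variable k : nat.
Local Notation T := ('I_k.+1 -> R).
Local Notation LM := (@leb_measurable R k.+1).
Local Notation LMR X := (@leb_measurable R 1 (to1 X)).

Lemma LM_nonneg_seq (s : seq 'I_k.+1) : LM [set x : T | forall i, i \in s -> 0 <= x i].
Proof.
elim: s => [|i s IH].
  by apply: (LM_ext _ (@LM_setT R k)); apply/seteqP; split.
have h := LM_setI (LM_ge i 0) IH.
apply: (LM_ext _ h); apply/seteqP; split => x /=.
  by move=> [h1 h2] j; rewrite inE => /orP[/eqP ->|/h2].
by move=> h1; split; [apply: h1; rewrite mem_head|move=> j js; apply: h1; rewrite inE js orbT].
Qed.

Lemma LM_nnz : LM (@nonneg_nz R k.+1).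
Proof.
have h := LM_setD (LM_nonneg_seq (enum 'I_k.+1)) (LM_null (LO_point (fun _ : 'I_k.+1 => (0 : R)))).
apply: (LM_ext _ h); apply/seteqP; split => x /=.
  by move=> [h1 h2]; split => // i; apply: h1; rewrite mem_enum.
by move=> [h1 h2]; split => // i _; exact: h1.
Qed.

Lemma LM_const (P : Prop) : LM [set _ : T | P].
Proof.
case: (pselect P) => hP.
  by apply: (LM_ext _ (@LM_setT R k)); apply/seteqP; split.
apply: (LM_ext _ (LM_setC (@LM_setT R k))); apply/seteqP; split => x //=.
Qed.

Lemma LM_cylR i (X : set R) : LMR X -> LM [set x : T | X (x i)].
Proof. by move=> h; exact: (LM_cyl i h). Qed.

Lemma gap_D4 (g : T -> T -> R) (phi : R -> R) :
  leb_measurable_fun1 (@pos_reals R) phi -> is_gap_function g phi -> cond_D4 g.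
Proof.
move=> mphi hg.
pose a (r : T) := fun i => if 0 < r i then - phi (r i) else 0.
exists a, phi; split => //.
- move=> j; split; first exact: LM_nnz.
  move=> t.
  have h1 := LM_cylR j (mfun1_gt mphi (- t)).
  have h2 := LM_setI (LM_leq j 0) (LM_const (0 < t)).
  have h := LM_setI LM_nnz (LM_setU h1 h2).
  apply: (LM_ext _ h); apply/seteqP; split => x /=; rewrite /a.
    move=> [nx [[x0 hp]|[x0 t0]]]; split => //.
      by rewrite x0 ltrNl.
    by rewrite [0 < x j]ltNge x0.
  move=> [nx]; case: ifP => x0 ht; split => //.
    by left; split => //; rewrite -ltrNl.
  by right; split => //; rewrite leNgt x0.
- move=> m r m0 rnz p hp hm.
  rewrite (gap_form hg hp) hm [RHS]addrC [dot (a r) p]dotC; congr (_ + _).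
  rewrite /dot -!(supp_sum _ (inD_ge0 hp)) -sumrN; apply: eq_bigr => i pi.
  by rewrite /a (inD_supp hp pi) mulrN.
Qed.

End GD4n.

Section CLN.
Variable R : realType.

Lemma mfun1_cln (c : R) : leb_measurable_fun1 (@pos_reals R) (fun x => c * ln x).
Proof.
have hpos := @LM_gt R 0 ord0 0.
split; first exact: hpos.
move=> t.
have [c0|c0|->] := ltgtP c 0.
- have tc : t = c * (t / c) by rewrite mulrC divfK ?lt_eqF.
  have h := LM_setI hpos (@LM_gt R 0 ord0 (expR (t / c))).
  apply: (LM_ext _ h); apply/seteqP; split => x /= [x0 hx]; split => //.
    have : t / c < ln (x ord0) by rewrite -ltr_expR lnK ?posrE.
    by move=> h1; rewrite [X in _ < X]tc ltr_nM2l.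
  move: hx; rewrite [X in _ < X]tc ltr_nM2l // => hx.
  by rewrite -[x ord0]lnK ?posrE // ltr_expR.
- have tc : t = c * (t / c) by rewrite mulrC divfK ?gt_eqF.
  have h := LM_setI hpos (@LM_lt R 0 ord0 (expR (t / c))).
  apply: (LM_ext _ h); apply/seteqP; split => x /= [x0 hx]; split => //.
    have : ln (x ord0) < t / c by rewrite -ltr_expR lnK ?posrE.
    by move=> h1; rewrite [X in _ < X]tc ltr_pM2l.
  move: hx; rewrite [X in _ < X]tc ltr_pM2l // => hx.
  by rewrite -[x ord0]lnK ?posrE // ltr_expR.
- have h := LM_setI hpos (@LM_const R 0 (0 < t)).
  apply: (LM_ext _ h); apply/seteqP; split => x /= [x0 hx]; split => //.
    by rewrite mul0r.
  by move: hx; rewrite mul0r.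
Qed.

End CLN.

Section Aff.
Variable R : realType.

Lemma jensen_affine (F : R -> R) :
  (forall x y t, 0 < x -> 0 < y -> 0 <= t <= 1 ->
     F (t * x + (1 - t) * y) = t * F x + (1 - t) * F y) ->
  forall x, 0 < x -> F x = F 1 + (F 2 - F 1) * (x - 1).
Proof.
move=> hF x x0.
have [x1|x1] := leP x 1.
  set t := (2 - x)^-1.
  have hx : 0 < 2 - x by lra.
  have t0 : 0 < t by rewrite invr_gt0.
  have t1 : t <= 1 by rewrite invf_le1 //; lra.
  have := hF x 2 t x0 (ltr0Sn _ 1) (introT andP (conj (ltW t0) t1)).
  have -> : t * x + (1 - t) * 2 = 1 by rewrite /t; field; lra.
  move=> e; have : F x = (2 - x) * F 1 - (1 - x) * F 2.
    rewrite e /t; field; lra.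
  move=> ->; ring.
have [x2|x2] := leP x 2.
  have ht : 0 <= 2 - x <= 1 by apply/andP; split; lra.
  have := hF 1 2 (2 - x) ltr01 (ltr0Sn _ 1) ht.
  have -> : (2 - x) * 1 + (1 - (2 - x)) * 2 = x by ring.
  move=> ->; ring.
set t := (x - 2) / (x - 1).
have hx : 0 < x - 1 by lra.
have t0 : 0 <= t by rewrite /t divr_ge0 //; lra.
have t1 : t <= 1 by rewrite /t ler_pdivrMr //; lra.
have := hF 1 x t ltr01 x0 (introT andP (conj t0 t1)).
have -> : t * 1 + (1 - t) * x = 2 by rewrite /t; field; lra.
move=> e; rewrite e /t; field; lra.
Qed.

End Aff.

Section Main2.
Variable R : realType.
Variable n : nat.
Local Notation V := ('I_n -> R).
Local Notation lam X := (@leb_outer R 1 (to1 X)).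
Local Notation LMR X := (@leb_measurable R 1 (to1 X)).

Lemma D3_jensen (g : V -> V -> R) (phi : R -> R) (i0 i1 : 'I_n) :
  i0 != i1 -> is_gap_function g phi -> cond_D3 g ->
  forall al, 0 < al -> forall x y t, 0 < x -> 0 < y -> 0 <= t <= 1 ->
  phi (al * (t * x + (1 - t) * y)) - phi (t * x + (1 - t) * y) =
  t * (phi (al * x) - phi x) + (1 - t) * (phi (al * y) - phi y).
Proof.
move=> i01 hg hD3 al al0 x y t x0 y0 ht.
pose r := fun i : 'I_n => if i == i0 then x else y.
have r0 : nonneg r by move=> i; rewrite /r; case: ifP => _; apply: ltW.
have ri0 : r i0 = x by rewrite /r eqxx.
have ri1 : r i1 = y by rewrite /r eq_sym (negbTE i01).
have e0 : inD (ev i0) r by apply: inD_ev; rewrite // ri0.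
have e1 : inD (ev i1) r by apply: inD_ev; rewrite // ri1.
have h := inD_comb e0 e1 ht.
have h' := inD_scale h al0.
have := hD3 _ _ al h al0.
rewrite !(gap_form hg) // !dot_comb !dot_ev ri0 ri1.
have -> : t * (al * x) + (1 - t) * (al * y) = al * (t * x + (1 - t) * y) by ring.
lra.
Qed.


Lemma D234_gamma (g : V -> V -> R) (i0 i1 : 'I_n) : i0 != i1 ->
  cond_D2 g -> cond_D3 g -> cond_D4 g ->
  exists c : R, forall p r, inD p r -> g p r = c * Gamma p r.
Proof.
move=> i01 hD2 hD3 hD4.
have [phi [mphi hg]] := D2D4_gap hD2 hD4.
have J := D3_jensen i01 hg hD3.
pose A al := phi (al * 2) - phi 2 - phi al + phi 1.
have E al x : 0 < al -> 0 < x -> phi (al * x) = phi x + (phi al - phi 1) + A al * (x - 1).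
  move=> al0 x0.
  have := @jensen_affine R (fun z => phi (al * z) - phi z) (J al al0) x x0.
  rewrite /A mulr1 => e; lra.
have Asym al x : 0 < al -> 0 < x -> A al * (x - 1) = A x * (al - 1).
  move=> al0 x0; have e1 := E al x al0 x0; have e2 := E x al x0 al0.
  rewrite mulrC in e2; lra.
set d := A 2.
have Ad al : 0 < al -> A al = d * (al - 1).
  move=> al0; have := Asym al 2 al0 (ltr0Sn _ 1).
  have -> : (2 : R) - 1 = 1 by lra.
  by rewrite mulr1.
pose B y := phi y - phi 1 - d * (y - 1).
have Bmul x y : 0 < x -> 0 < y -> B (x * y) = B x + B y.
  by move=> x0 y0; rewrite /B E // Ad //; ring.
pose Em (m : nat) := [set x : R | (1 <= x <= 2)] `&`
  ([set y | 0 < y /\ phi y < m%:R] `\` [set y | 0 < y /\ phi y < - m%:R]).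
have mEm m : LMR (Em m).
  apply: LMR_I; first exact: LMR_itv.
  exact: (LM_setD (mfun1_lt mphi _) (mfun1_lt mphi _)).
have Em12 m : Em m `<=` [set x : R | (1 <= x <= 2)] by move=> x [].
have [m hm] : exists m, (0 < lam (Em m))%E.
  apply: contrapT => nm.
  have z : forall m, lam (Em m) = 0%E.
    move=> m; apply/eqP; rewrite eq_le lam_ge0 andbT leNgt; apply/negP => h.
    by apply: nm; exists m.
  have cov : to1 [set x : R | (1 <= x <= 2)] `<=` \bigcup_m to1 (Em m).
    move=> y /= hy.
    have hn : 0 <= `|phi (y ord0)| by [].
    exists (Num.Def.archi_bound `|phi (y ord0)|) => //.
    have := archi_boundP hn; set M := _%:R => hM.
    split => //; split.
      split; first by move/andP: hy => [h _]; lra.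
      by move: hM; rewrite ltr_norml => /andP[].
    move=> [_]; apply/negP; rewrite -leNgt.
    by move: hM; rewrite ltr_norml => /andP[/ltW].
  have := outer_measure_sigma_subadditive (@leb_outer R 1) (fun m => to1 (Em m)).
  rewrite eseries0; last by move=> i _ _; exact: z.
  move=> h; have := le_trans (le_LO cov) h.
  have := lam_itv_ge (R:=R) (u:=1) (v:=2) (ler1n _ 2).
  move=> /le_trans h1 /h1; rewrite lee_fin; lra.
have [dl dl0 hst] := steinhaus (mEm m) (Em12 m) hm.
set K := m%:R + `|phi 1| + `|d|.
have bound z : Em m z -> `|B z| <= K.
  move=> [/andP[z1 z2] [[z0 hz1] hz2]].
  have hz3 : - m%:R <= phi z.
    by rewrite leNgt; apply/negP => hh; apply: hz2.
  have h1 : `|phi z| <= m%:R by rewrite ler_norml hz3 ltW.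
  have h2 : `|d * (z - 1)| <= `|d|.
    rewrite normrM -[X in _ <= X]mulr1 ler_wpM2l // ler_norml; apply/andP; split; lra.
  rewrite /B /K.
  apply: (le_trans (ler_normB _ _)); rewrite lerD //.
  by apply: (le_trans (ler_normB _ _)); rewrite lerD.
have hb s : 1 <= s <= 1 + dl -> `|B s| <= K + K.
  move=> hs; have [x [y [Ex Ey xe]]] := hst s hs.
  have s0 : 0 < s by move/andP: hs => [h _]; lra.
  have y0 : 0 < y by case: Ey => /andP[h _]; lra.
  have : B s = B x - B y by rewrite xe Bmul //; ring.
  move=> ->; apply: (le_trans (ler_normB _ _)); apply: lerD; exact: bound.
have [c hc] := log_cauchy Bmul dl0 hb.
exists c => p r h.
have hphi z : 0 < z -> phi z = c * ln z + phi 1 + d * (z - 1).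
  by move=> z0; have := hc z z0; rewrite /B => e; lra.
rewrite (hg p r h) /Gamma.
have w0 : 0 < wmean p r by rewrite wmean_dot //; exact: inD_pos_dot.
rewrite (hphi _ w0).
rewrite (eq_bigr (fun i => c * (p i * ln (r i)) + (phi 1 - d) * p i + d * (p i * r i))); last first.
  by move=> i pi; rewrite hphi ?(inD_supp h pi) //; ring.
rewrite !big_split /= -!mulr_sumr (supp_sum1 h).
rewrite -[\sum_(i < n | 0 < p i) p i * r i]/(wmean p r); ring.
Qed.

End Main2.

Unset Implicit Arguments.
Theorem mainTheorem11 (R : realType) (n : nat) (hn : (2 <= n)%N)
    (g : ('I_n -> R) -> ('I_n -> R) -> R)
    (hg : jointly_leb_measurable g) :
  (* (i) *)
  ((exists phi : R -> R, leb_measurable_fun1 (@pos_reals R) phi /\ is_gap_function g phi)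
     <-> cond_D2 g /\ cond_D4 g) /\
  (forall phi : R -> R, leb_measurable_fun1 (@pos_reals R) phi -> is_gap_function g phi ->
     (concave_on_pos phi <-> cond_D1 g)) /\
  (* (ii) *)
  ((cond_D2 g /\ cond_D3 g /\ cond_D4 g)
     <-> exists c : R, forall p r, inD p r -> g p r = c * Gamma p r) /\
  (forall c : R, (forall p r, inD p r -> g p r = c * Gamma p r) ->
     (0 <= c <-> cond_D1 g)).
Proof.
case: n hn g hg => [//|k] hn g _.
pose i1 : 'I_k.+1 := Ordinal hn.
have i01 : (ord0 : 'I_k.+1) != i1 by [].
split; [|split; [|split]].
- split.
  + move=> [phi [mphi hgap]]; split; [exact: gap_D2 hgap | exact: gap_D4 mphi hgap].
  + by move=> [h2 h4]; exact: D2D4_gap h2 h4.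
- by move=> phi _ hgap; exact: gap_concave i01 hgap.
- split.
  + by move=> [h2 [h3 h4]]; exact: D234_gamma i01 h2 h3 h4.
  + move=> [c hc]; have hgap := gamma_gap hc.
    split; first exact: gap_D2 hgap.
    split; first exact: gamma_D3 hc.
    exact: gap_D4 (mfun1_cln c) hgap.
- by move=> c hc; exact: gamma_D1 i01 hc.
Qed.
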